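(* Let $n\ge 2$ and let $\mathrm W=\mathfrak S_n\ltimes\mathfrak X$ be the extended affine Weyl group, where $\mathfrak X$ is the free abelian group of Laurent monomials $X_1^{a_1}\cdots X_n^{a_n}$ ($a_i\in\mathbb Z$) on which $\mathfrak S_n$ acts by $wX_iw^{-1}=X_{w(i)}$. For $J,K\subseteq \mathbb I=\{s_1,\dots,s_{n-1}\}$, the sets $$\Delta_{K,J}=\{dp \mid d\in D^{\mathbb I}_{K,J},\ p\in \overrightarrow{\mathfrak P}_{d^{-1}K\cap J}\},\qquad \nabla_{K,J}=\{dp \mid d\in D^{\mathbb I}_{K,J},\ p\in \overleftarrow{\mathfrak P}_{d^{-1}K\cap J}\}$$ are each a complete set of pairwise inequivalent representatives of the double cosets $\mathrm W_K\backslash \mathrm W/\mathrm W_J$.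
   Context: $s_i$ denotes the simple transposition $(i,i+1)\in\mathfrak S_n$. For $L\subseteq\mathbb I$, $\mathrm W_L$ is the (finite) parabolic subgroup of $\mathfrak S_n\subseteq\mathrm W$ generated by $L$. $D^{\mathbb I}_{K,J}$ denotes the set of minimal-length (Coxeter length in $\mathfrak S_n$) representatives of the double cosets $\mathrm W_K\backslash\mathfrak S_n/\mathrm W_J$. For $d\in D^{\mathbb I}_{K,J}$, $d^{-1}K\cap J=\{s\in J\mid dsd^{-1}\in K\}$. For $L\subseteq\mathbb I$, a monomial $X_1^{a_1}\cdots X_n^{a_n}$ is $L$-dominant if $a_i\ge a_j$ whenever $i\le j$ lie in the same orbit of $\mathrm W_L$ on $\{1,\dots,n\}$, and $L$-antidominant if $a_i\le a_j$ for all such $i\le j$; $\overrightarrow{\mathfrak P}_L$ and $\overleftarrow{\mathfrak P}_L$ denote the sets of $L$-dominant, respectively $L$-antidominant, monomials. *)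

(* Defs.v *)
From HB Require Import structures.
From mathcomp Require Import all_boot all_order all_algebra all_fingroup.
Set Implicit Arguments. Unset Strict Implicit. Unset Printing Implicit Defensive.
Import GRing.Theory.

(* Conventions: permutations of 'I_n act on {1..n} = 'I_n.  MathComp's
   product satisfies (s * t)%g x = t (s x); we use [comp w v] for the
   usual composition w o v, as in the paper. *)
Definition comp n (w v : 'S_n) : 'S_n := (v * w)%g.

(* simple transposition s_i = (i, i+1), indexed by i : 'I_n.-1
   (i.e. i = 0 .. n-2 stands for s_1 .. s_{n-1}) *)
Definition stp n (i : 'I_n.-1) : 'S_n :=
  let i0 : 'I_n := widen_ord (leq_pred n) i in
  tperm i0 (insubd i0 i.+1).

Definition Wpar n (L : {set 'I_n.-1}) : {set 'S_n} :=
  <<[set stp i | i in L]>>%g.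

Definition word_prod n (t : seq 'I_n.-1) : 'S_n :=
  foldr (fun i w => comp (stp i) w) 1%g t.

(* Coxeter length comparison: len x <= len y, where len is the minimal
   length of a word in the simple transpositions *)
Definition len_le n (x y : 'S_n) : Prop :=
  forall t : seq 'I_n.-1, word_prod t = y ->
    exists t' : seq 'I_n.-1, size t' <= size t /\ word_prod t' = x.

(* d \in D^I_{K,J}: d has minimal Coxeter length in W_K d W_J *)
Definition in_D n (K J : {set 'I_n.-1}) (d : 'S_n) : Prop :=
  forall u v, u \in Wpar K -> v \in Wpar J -> len_le d (comp (comp u d) v).

(* d^{-1} K \cap J = { s in J | d s d^{-1} in K } *)
Definition dKJ n (K J : {set 'I_n.-1}) (d : 'S_n) : {set 'I_n.-1} :=
  [set j in J | comp (comp d (stp j)) (d^-1)%g \in [set stp k | k in K]].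

(* monomials X^a, a : 'I_n -> int *)
Definition mono n := {ffun 'I_n -> int}.

Definition same_orbit n (L : {set 'I_n.-1}) (i j : 'I_n) : Prop :=
  exists2 w, w \in Wpar L & w i = j.

Definition dominant n (L : {set 'I_n.-1}) (a : mono n) : Prop :=
  forall i j : 'I_n, (i <= j)%N -> same_orbit L i j -> (a j <= a i)%R.
Definition antidominant n (L : {set 'I_n.-1}) (a : mono n) : Prop :=
  forall i j : 'I_n, (i <= j)%N -> same_orbit L i j -> (a i <= a j)%R.

(* extended affine Weyl group W = S_n |x X; the pair (w, a) is w X^a *)
Definition W n := ('S_n * mono n)%type.

(* (w X^a)(v X^b) = (w o v) X^(v^{-1}.a + b), with w X_i w^{-1} = X_{w(i)} *)
Definition mulW n (x y : W n) : W n :=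
  (comp x.1 y.1, [ffun i => (x.2 (y.1 i) + y.2 i)%R]).

Definition ofS n (w : 'S_n) : W n := (w, [ffun => 0%R]).

Definition dc_equiv n (K J : {set 'I_n.-1}) (x y : W n) : Prop :=
  exists u v, [/\ u \in Wpar K, v \in Wpar J & y = mulW (mulW (ofS u) x) (ofS v)].

Definition Delta n (K J : {set 'I_n.-1}) (x : W n) : Prop :=
  in_D K J x.1 /\ dominant (dKJ K J x.1) x.2.
Definition Nabla n (K J : {set 'I_n.-1}) (x : W n) : Prop :=
  in_D K J x.1 /\ antidominant (dKJ K J x.1) x.2.

Definition complete_repr n (K J : {set 'I_n.-1}) (S : W n -> Prop) : Prop :=
  (forall x : W n, exists2 y, S y & dc_equiv K J x y) /\
  (forall y1 y2, S y1 -> S y2 -> dc_equiv K J y1 y2 -> y1 = y2).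

(* Main.v *)
Require Import Defs.
From mathcomp Require Import all_boot all_order all_algebra all_fingroup.
From mathcomp Require Import zify.
Import GRing.Theory Num.Theory Order.TTheory.
Set Implicit Arguments. Unset Strict Implicit. Unset Printing Implicit Defensive.

Section S.
Variable n : nat.
Implicit Types (k l : 'I_n.-1) (L : {set 'I_n.-1}).

Definition lo (k : 'I_n.-1) : 'I_n := widen_ord (leq_pred n) k.
Definition hi (k : 'I_n.-1) : 'I_n := insubd (lo k) k.+1.

Lemma lt_pred_n (k : 'I_n.-1) : k.+1 < n.
Proof. have := ltn_ord k. by case: n k => //= m. Qed.

Lemma loE k : nat_of_ord (lo k) = k. Proof. by []. Qed.
Lemma hiE k : nat_of_ord (hi k) = k.+1.
Proof. by rewrite /hi /= val_insubd lt_pred_n. Qed.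

Lemma stpE k : stp k = tperm (lo k) (hi k).
Proof. by []. Qed.

Lemma lo_neq_hi k : lo k != hi k.
Proof. by rewrite -val_eqE /= hiE neq_ltn ltnSn. Qed.
Lemma stp_val k (x : 'I_n) :
  nat_of_ord (stp k x) = if nat_of_ord x == k then k.+1 else if nat_of_ord x == k.+1 then nat_of_ord k else nat_of_ord x.
Proof.
rewrite stpE; case: tpermP => [->|->|/eqP a /eqP b].
- by rewrite ?loE eqxx hiE.
- by rewrite hiE ?loE eqxx (gtn_eqF (ltnSn _)).
- rewrite -val_eqE /= in a; rewrite -val_eqE /= hiE in b.
  by rewrite (negbTE a) (negbTE b).
Qed.

Lemma stpK k : involutive (stp k).
Proof. by move=> x; rewrite stpE tpermK. Qed.

Lemma stp_mul k : (stp k * stp k = 1)%g.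
Proof. by apply/permP => x; rewrite permM perm1 stpK. Qed.

Definition cnt (P : 'I_n -> 'I_n -> bool) : nat :=
  \sum_(x : 'I_n) \sum_(y : 'I_n) ((x < y) && P x y).

Lemma cnt_swap (P : 'I_n -> 'I_n -> bool) (k : 'I_n.-1) :
  cnt (fun x y => P (stp k x) (stp k y)) + P (lo k) (hi k)
  = cnt P + P (hi k) (lo k).
Proof.
rewrite /cnt.
have -> : \sum_(x : 'I_n) \sum_(y : 'I_n) ((x < y) && P (stp k x) (stp k y))
   = \sum_(x : 'I_n) \sum_(y : 'I_n) ((stp k x < stp k y) && P x y).
  rewrite (reindex_inj (inv_inj (stpK k))) /=; apply: eq_bigr => x _.
  rewrite (reindex_inj (inv_inj (stpK k))) /=; apply: eq_bigr => y _.
  by rewrite !stpK.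
rewrite !pair_big /=.
have E1 : forall c : nat, c = \sum_(p : 'I_n * 'I_n) ((p == (lo k, hi k)) * c).
  move=> c; rewrite (bigD1 (lo k, hi k)) //= eqxx mul1n big1 ?addn0 //.
  by move=> p /negbTE ->.
have E2 : forall c : nat, c = \sum_(p : 'I_n * 'I_n) ((p == (hi k, lo k)) * c).
  move=> c; rewrite (bigD1 (hi k, lo k)) //= eqxx mul1n big1 ?addn0 //.
  by move=> p /negbTE ->.
rewrite {1}(E1 (P (lo k) (hi k))) (E2 (P (hi k) (lo k))) -!big_split /=.
apply: eq_bigr => [[x y]] _ /=.
have Hh := hiE k.
have nlh := negbTE (lo_neq_hi k).
case: (eqVneq (x, y) (lo k, hi k)) => [[-> ->]|ne1].
  rewrite stpE tpermL tpermR /= Hh ltnNge leqnSn ltnSn /= xpair_eqE nlh /=.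
  by case: (P _ _); case: (P _ _).
case: (eqVneq (x, y) (hi k, lo k)) => [[-> ->]|ne2].
  rewrite stpE tpermL tpermR /= Hh ltnSn ltnNge leqnSn /=.
  by case: (P _ _); case: (P _ _).
rewrite !mul0n !addn0; congr (_ && _).
rewrite !xpair_eqE -!val_eqE /= Hh in ne1 ne2.
rewrite !stp_val.
repeat (case: eqP => ?); apply/idP/idP => ?; lia.
Qed.

Definition inv (w : 'S_n) := cnt (fun x y => w y < w x).

Lemma inv_stpM (w : 'S_n) k :
  inv (stp k * w)%g + (w (hi k) < w (lo k)) = inv w + (w (lo k) < w (hi k)).
Proof.
rewrite /inv -(cnt_swap (fun x y => w y < w x)).
by congr (_ + _); apply: eq_bigr => x _; apply: eq_bigr => y _; rewrite !permM.
Qed.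

Lemma inv_invg (w : 'S_n) : inv (w^-1)%g = inv w.
Proof.
rewrite /inv /cnt (reindex_inj (@perm_inj _ w)) /=.
under eq_bigr => x _ do rewrite (reindex_inj (@perm_inj _ w)) /=.
rewrite exchange_big /=; apply: eq_bigr => x _; apply: eq_bigr => y _.
by rewrite !permK andbC.
Qed.

Lemma stpV k : ((stp k)^-1 = stp k)%g.
Proof. by rewrite stpE tpermV. Qed.

Lemma inv_Mstp (w : 'S_n) k :
  inv (w * stp k)%g + (w^-1 (hi k) < w^-1 (lo k))%g
   = inv w + (w^-1 (lo k) < w^-1 (hi k))%g.
Proof. by rewrite -inv_invg invMg stpV inv_stpM inv_invg. Qed.

Lemma inv_word (t : seq 'I_n.-1) : inv (word_prod t) <= size t.
Proof.
elim: t => [|i t IH] /=.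
  rewrite /inv /cnt big1 // => x _; rewrite big1 // => y _.
  by rewrite !perm1; case: (ltngtP x y).
rewrite /Defs.comp; have := inv_Mstp (word_prod t) i.
case: (_ < _); case: (_ < _); rewrite /= ?addn0 ?addn1; lia.
Qed.

Lemma perm_mono_id (w : 'S_n) :
  (forall k, w (lo k) < w (hi k)) -> w = 1%g.
Proof.
move=> H.
have up : forall m (x : 'I_n), nat_of_ord x = m -> m <= w x.
  elim=> [//|m IH] x xm.
  have xn : m < n.-1 by have := ltn_ord x; rewrite xm; lia.
  pose k : 'I_n.-1 := Ordinal xn.
  have -> : x = hi k by apply/val_inj; rewrite /= hiE.
  by have := IH (lo k) erefl; have := H k; lia.
have down : forall m (x : 'I_n), nat_of_ord x + m = n.-1 -> w x + m <= n.-1.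
  elim=> [|m IH] x xm.
    by rewrite addn0; have := ltn_ord (w x); lia.
  have xn : nat_of_ord x < n.-1 by lia.
  pose k : 'I_n.-1 := Ordinal xn.
  have -> : x = lo k by apply/val_inj.
  have := IH (hi k); rewrite hiE /=; have := H k; lia.
apply/permP => x; apply/val_inj; rewrite perm1 /=.
have := up _ x erefl; have := down (n.-1 - x) x; have := ltn_ord x; lia.
Qed.

Lemma descent (w : 'S_n) : w != 1%g -> exists k, w (hi k) < w (lo k).
Proof.
move=> w1; apply/existsP; apply: contraR w1 => /existsPn H; apply/eqP.
apply: perm_mono_id => k; have := H k; rewrite -leqNgt leq_eqVlt.
case/orP=> // /eqP/val_inj/perm_inj E; move: (lo_neq_hi k); by rewrite E eqxx.
Qed.

Lemma word_exists (w : 'S_n) : exists t, size t = inv w /\ word_prod t = w.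
Proof.
have [m] := ubnP (inv w); elim: m w => // m IH w wm.
case: (eqVneq (w^-1)%g 1%g) => [w1|w1].
  have -> : w = 1%g by rewrite -(invgK w) w1 invg1.
  exists [::]; split => //; rewrite /inv /cnt big1 // => x _; rewrite big1 // => y _.
  by rewrite !perm1; case: (ltngtP x y).
have [k Hk] := descent w1.
have := inv_Mstp w k; rewrite Hk /= => E.
have [t [st wt]] := IH (w * stp k)%g ltac:(lia).
exists (k :: t); split; first by rewrite /= st; lia.
by rewrite /= /Defs.comp wt -mulgA stp_mul mulg1.
Qed.

Lemma chain (T : Type) (R : T -> T -> Prop) (f : 'I_n -> T) :
  (forall a, R a a) -> (forall a b c, R a b -> R b c -> R a c) ->
  forall x y : 'I_n, x <= y ->
  (forall k : 'I_n.-1, x <= k -> k < y -> R (f (lo k)) (f (hi k))) ->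
  R (f x) (f y).
Proof.
move=> Rr Rt x y xy H.
have : forall m (z : 'I_n), nat_of_ord z = x + m -> z <= y -> R (f x) (f z).
  elim=> [|m IH] z zm zy.
    by have -> : z = x by apply/val_inj; rewrite /= zm addn0.
  have zn : x + m < n.-1 by have := ltn_ord z; rewrite zm; lia.
  pose k : 'I_n.-1 := Ordinal zn.
  have -> : z = hi k by apply/val_inj; rewrite /= hiE zm addnS.
  apply: Rt (IH (lo k) erefl _) _; first by rewrite /=; lia.
  apply: H => /=; lia.
move/(_ (y - x) y); apply => //; lia.
Qed.

Definition inL (L : {set 'I_n.-1}) (k : nat) : bool :=
  [exists i in L, nat_of_ord i == k].
Definition F (L : {set 'I_n.-1}) (m : nat) : nat :=
  \sum_(0 <= k < m) ~~ inL L k.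

Lemma inL_ord L k : inL L k = (k \in L).
Proof.
apply/existsP/idP => [[i /andP[iL /eqP/val_inj E]]|kL]; first by rewrite -E.
by exists k; rewrite kL eqxx.
Qed.

Lemma F_S L m : F L m.+1 = F L m + ~~ inL L m.
Proof. by rewrite /F big_nat_recr. Qed.

Lemma F_split L x y : x <= y -> F L y = F L x + \sum_(x <= k < y) ~~ inL L k.
Proof. by move=> xy; rewrite /F (big_cat_nat (leq0n x) xy). Qed.

Lemma F_mono L x y : x <= y -> F L x <= F L y.
Proof. by move=> xy; rewrite (F_split L xy) leq_addr. Qed.

Lemma F_eqP L x y : x <= y ->
  F L x = F L y <-> (forall m : nat, x <= m -> m < y -> inL L m).
Proof.
move=> xy; rewrite (F_split L xy); split.
  move=> /eqP; rewrite -{1}[F L x]addn0 eqn_add2l eq_sym sum_nat_seq_eq0.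
  move=> /allP H k xk ky; have := H k; rewrite mem_index_iota xk ky => /(_ erefl).
  by case: (inL L k).
move=> H; rewrite big_nat big1 ?addn0 // => k /andP[xk ky].
by rewrite H.
Qed.

Lemma F_stp L l (x : 'I_n) : l \in L -> F L (stp l x) = F L x.
Proof.
move=> lL; rewrite stp_val; have Hl : F L l.+1 = F L l by rewrite F_S inL_ord lL addn0.
by case: ifP => [/eqP ->|_] //; case: ifP => [/eqP ->|_].
Qed.

Definition blkset (L : {set 'I_n.-1}) : {set 'S_n} :=
  [set w : 'S_n | [forall x, F L (w x) == F L x]].

Lemma blkset_group L : group_set (blkset L).
Proof.
apply/group_setP; split; first by rewrite inE; apply/forallP => x; rewrite perm1.
move=> u v; rewrite !inE => /forallP Hu /forallP Hv; apply/forallP => x.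
by rewrite permM (eqP (Hv _)) (eqP (Hu _)).
Qed.

Lemma W_blk L w x : w \in Wpar L -> F L (w x) = F L x.
Proof.
move=> wW.
have sub : Wpar L \subset blkset L.
  rewrite /Wpar (gen_subG _ (Group (blkset_group L))); apply/subsetP.
  move=> _ /imsetP[l lL ->]; rewrite inE; apply/forallP => y.
  by rewrite F_stp.
by have := subsetP sub w wW; rewrite inE => /forallP/(_ x)/eqP.
Qed.

Lemma stp_W L l : l \in L -> stp l \in Wpar L.
Proof. by move=> lL; apply: mem_gen; apply: imset_f. Qed.

Lemma same_orbitE L (x y : 'I_n) : x <= y ->
  same_orbit L x y <-> F L x = F L y.
Proof.
move=> xy; split; first by move=> [w wW <-]; rewrite W_blk.
move/(F_eqP L xy) => H.
pose R := fun (a b : 'I_n) => exists2 w, w \in Wpar L & w a = b.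
apply: (@chain _ R id) => //.
- by move=> a; exists 1%g; rewrite ?group1 ?perm1.
- move=> a b c [u uW ua] [v vW vb]; exists (u * v)%g; first by rewrite groupM.
  by rewrite permM ua.
- move=> k xk ky; exists (stp k); last by rewrite stpE tpermL.
  apply: stp_W; rewrite -inL_ord; exact: H.
Qed.

Lemma dominantE L (a : mono n) : dominant L a <->
  (forall x y : 'I_n, x <= y -> F L x = F L y -> (a y <= a x)%R).
Proof.
split=> H x y xy; first by move=> e; apply: H => //; apply/same_orbitE.
by move/(same_orbitE L xy); apply: H.
Qed.

Lemma antidominantE L (a : mono n) : antidominant L a <->
  (forall x y : 'I_n, x <= y -> F L x = F L y -> (a x <= a y)%R).
Proof.
split=> H x y xy; first by move=> e; apply: H => //; apply/same_orbitE.
by move/(same_orbitE L xy); apply: H.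
Qed.

Lemma card_lt (m : nat) : m <= n -> #|[set y : 'I_n | y < m]| = m.
Proof.
move=> mn.
have -> : [set y : 'I_n | y < m] = widen_ord mn @: [set: 'I_m].
  apply/setP => y; rewrite inE; apply/idP/imsetP => [ym|[i _ ->]].
    by exists (Ordinal ym) => //; apply/val_inj.
  by rewrite /= ltn_ord.
rewrite card_imset ?cardsT ?card_ord // => a b /(f_equal val) /= e.
exact: val_inj.
Qed.

Lemma sort_uniq (g : 'I_n -> nat) (v : 'S_n) (b : 'I_n -> int) :
  (forall z, g (v z) = g z) ->
  (forall x y : 'I_n, x <= y -> g x = g y -> (b y <= b x)%R) ->
  (forall x y : 'I_n, x <= y -> g x = g y -> (b (v y) <= b (v x))%R) ->
  forall z, b (v z) = b z.
Proof.
move=> gv Hb Hbv z.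
pose c := g z.
pose S t := [set y | (g y == c) && (t <= b y)%R].
pose S' t := [set y | (g y == c) && (t <= b (v y))%R].
have SS : forall t, S' t = S t.
  move=> t.
  have pre : S' t = v @^-1: S t by apply/setP => y; rewrite !inE gv.
  have cd : #|S' t| = #|S t| by rewrite pre card_preimset //; exact: perm_inj.
  case: (boolP (S t \subset S' t)) => sub.
    have := geq_leqif (subset_leqif_cards sub); rewrite cd leqnn.
    by move=> /esym/eqP.
  have [y yS yS'] := subsetPn sub.
  have sub' : S' t \subset S t.
    apply/subsetP => w; rewrite !inE => /andP[/eqP gw tw].
    move: yS yS'; rewrite !inE => /andP[/eqP gy ty] /negP yS'.
    rewrite gw eqxx /=.
    case: (leqP y w) => [yw|wy].
      case: yS'; rewrite gy eqxx /=; apply: le_trans tw _; apply: Hbv => //.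
      by rewrite gy gw.
    by apply: le_trans ty _; apply: Hb; [exact: ltnW | rewrite gy gw].
  have := geq_leqif (subset_leqif_cards sub'); rewrite cd leqnn.
  by move=> /esym/eqP.
apply: le_anti; apply/andP; split.
  have : z \in S' (b (v z)) by rewrite inE eqxx lexx.
  by rewrite SS inE => /andP[].
have : z \in S (b z) by rewrite inE eqxx lexx.
by rewrite -SS inE => /andP[].
Qed.
End S.

Section T.
Variable n : nat.
Variables K J : {set 'I_n.-1}.
Implicit Types (k l : 'I_n.-1).

Definition red (d : 'S_n) :=
  (forall j, j \in J -> d (lo j) < d (hi j)) /\
  (forall k, k \in K -> (d^-1)%g (lo k) < (d^-1)%g (hi k)).

Lemma lohi_inj (w : 'S_n) k : (w (lo k) == w (hi k)) = false.
Proof. by rewrite (inj_eq perm_inj) (negbTE (lo_neq_hi k)). Qed.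

Lemma in_D_red d : in_D K J d -> red d.
Proof.
move=> H; split.
  move=> j jJ; case: (ltngtP (d (lo j)) (d (hi j))) => // [lt|/val_inj/perm_inj e];
    last by move: (lo_neq_hi j); rewrite e eqxx.
  have E := inv_stpM d j; rewrite lt ltnNge (ltnW lt) /= in E.
  have [t [st wt]] := word_exists (stp j * d)%g.
  have := H 1%g (stp j) (group1 _) (stp_W jJ) t.
  rewrite /Defs.comp mulg1 wt => /(_ erefl) [t' [s' wd]].
  have := inv_word t'; rewrite wd; lia.
move=> k kK; case: (ltngtP ((d^-1)%g (lo k)) ((d^-1)%g (hi k))) => // [lt|/val_inj/perm_inj e];
  last by move: (lo_neq_hi k); rewrite e eqxx.
have E := inv_Mstp d k; rewrite lt ltnNge (ltnW lt) /= in E.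
have [t [st wt]] := word_exists (d * stp k)%g.
have := H (stp k) 1%g (stp_W kK) (group1 _) t.
rewrite /Defs.comp mul1g wt => /(_ erefl) [t' [s' wd]].
have := inv_word t'; rewrite wd; lia.
Qed.

Lemma F_lohi L k : F L (hi k) = F L (lo k) + ~~ (k \in L).
Proof. by rewrite hiE /= F_S inL_ord. Qed.

Lemma mono_J d (x y : 'I_n) : red d -> x <= y -> F J x = F J y -> d x <= d y.
Proof.
move=> [HJ _] xy /(F_eqP J xy) H.
apply: (@chain n nat (fun a b : nat => a <= b) (fun z => nat_of_ord (d z))) => //.
- by move=> a b c; apply: leq_trans.
- move=> k xk ky; apply: ltnW; apply: HJ; rewrite -inL_ord; exact: H.
Qed.

Lemma mono_K d (x y : 'I_n) : red d -> x <= y -> F K x = F K y ->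
  (d^-1)%g x <= (d^-1)%g y.
Proof.
move=> [_ HK] xy /(F_eqP K xy) H.
apply: (@chain n nat (fun a b : nat => a <= b) (fun z => nat_of_ord ((d^-1)%g z))) => //.
- by move=> a b c; apply: leq_trans.
- move=> k xk ky; apply: ltnW; apply: HK; rewrite -inL_ord; exact: H.
Qed.

Lemma count_formula d (x : 'I_n) : red d ->
  nat_of_ord (d x) = #|[set z : 'I_n | (F K (d z) < F K (d x)) ||
                         ((F K (d z) == F K (d x)) && (z < x))]|.
Proof.
move=> rd.
have -> : [set z : 'I_n | (F K (d z) < F K (d x)) ||
                         ((F K (d z) == F K (d x)) && (z < x))]
          = d @^-1: [set y : 'I_n | y < d x].
  apply/setP => z; rewrite !inE; apply/idP/idP.
    case/orP => [lt|/andP[/eqP eq zx]].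
      rewrite ltnNge; apply/negP => le; have := F_mono K le; lia.
    rewrite ltnNge; apply/negP => le.
    have := mono_K rd le (esym eq); rewrite !permK; lia.
  move=> lt; have le := F_mono K (ltnW lt).
  rewrite leq_eqVlt in le; case/orP: le => [/eqP eq|->] //.
  rewrite eq eqxx /=; have := mono_K rd (ltnW lt) eq; rewrite !permK.
  rewrite leq_eqVlt => /orP[/eqP/val_inj e|->]; last by rewrite orbT.
  by move: lt; rewrite e ltnn.
by rewrite card_preimset ?card_lt //; [exact: ltnW | exact: perm_inj].
Qed.

Lemma compE (u d v : 'S_n) z : (Defs.comp (Defs.comp u d) v) z = u (d (v z)).
Proof. by rewrite /Defs.comp !permM. Qed.

Lemma uniq_d d d' u v : red d -> red d' -> u \in Wpar K -> v \in Wpar J ->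
  d' = Defs.comp (Defs.comp u d) v -> d = d'.
Proof.
move=> rd rd' uK vJ dd'.
have hh : forall z, F K (d' z) = F K (d (v z)) by move=> z; rewrite dd' compE W_blk.
have hv : forall z, F K (d (v z)) = F K (d z).
  move=> z; have := @sort_uniq n (fun z => F J z) v (fun z => - (F K (d z))%:Z)%R.
  move=> /(_ _ _ _ z) H.
  have : (- (F K (d (v z)))%:Z = - (F K (d z))%:Z)%R.
    apply: H.
    - by move=> w; rewrite W_blk.
    - by move=> a b ab e; rewrite lerN2 lez_nat; apply: F_mono; apply: mono_J.
    - move=> a b ab e; rewrite lerN2 lez_nat -!hh; apply: F_mono; exact: mono_J.
  by move/oppr_inj => [].
apply/permP => x; apply/val_inj.
rewrite /= (count_formula x rd) (count_formula x rd'); apply: eq_card => z.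
by rewrite !inE !hh !hv.
Qed.

Lemma dKJE d j : (j \in dKJ K J d) =
  (j \in J) && (tperm (d (lo j)) (d (hi j)) \in [set stp k | k in K]).
Proof.
rewrite /dKJ inE.
have -> : Defs.comp (Defs.comp d (stp j)) (d^-1)%g = tperm (d (lo j)) (d (hi j)).
  by rewrite -tpermJ stpE.
by [].
Qed.

Lemma step_fwd d j : j \in dKJ K J d ->
  F J (lo j) = F J (hi j) /\ F K (d (lo j)) = F K (d (hi j)).
Proof.
rewrite dKJE => /andP[jJ /imsetP[k kK e]]; split.
  by rewrite F_lohi jJ addn0.
have : tperm (d (lo j)) (d (hi j)) (d (lo j)) = stp k (d (lo j)) by rewrite e.
by rewrite tpermL => ->; rewrite F_stp.
Qed.

Lemma step_bwd d j : red d -> j \in J -> F K (d (lo j)) = F K (d (hi j)) ->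
  j \in dKJ K J d.
Proof.
move=> rd jJ eK; rewrite dKJE jJ /=.
have lt := rd.1 j jJ.
have consec : nat_of_ord (d (hi j)) = (d (lo j)).+1.
  apply/eqP; rewrite eqn_leq lt andbT; apply/negP => /negP; rewrite -ltnNge => lt2.
  have mn : (d (lo j)).+1 < n by have := ltn_ord (d (hi j)); lia.
  pose y : 'I_n := Ordinal mn.
  have l1 : d (lo j) <= y by rewrite /=; lia.
  have l2 : y <= d (hi j) by rewrite /=; lia.
  have e1 : F K (d (lo j)) = F K y.
    by apply/eqP; rewrite eqn_leq F_mono //= eK F_mono.
  have e2 : F K y = F K (d (hi j)) by rewrite -e1.
  have m1 := mono_K rd l1 e1; have m2 := mono_K rd l2 e2.
  rewrite permK in m1; rewrite permK in m2.
  have n1 : (d^-1)%g y != lo j.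
    apply/negP => /eqP e; have : y = d (lo j) by rewrite -e permKV.
    by move/(f_equal val) => /=; lia.
  have n2 : (d^-1)%g y != hi j.
    apply/negP => /eqP e; have : y = d (hi j) by rewrite -e permKV.
    by move/(f_equal val) => /=; lia.
  move: n1 n2 m1 m2; rewrite -!val_eqE /= hiE; lia.
have kn : nat_of_ord (d (lo j)) < n.-1 by have := ltn_ord (d (hi j)); lia.
pose k : 'I_n.-1 := Ordinal kn.
have ek : lo k = d (lo j) by apply/val_inj.
have ek' : hi k = d (hi j) by apply/val_inj; rewrite /= hiE consec.
apply/imsetP; exists k; last by rewrite stpE ek ek'.
by have := F_lohi K k; rewrite ek ek' eK; case: (k \in K) => //=; lia.
Qed.

Lemma blk_fwd d (x y : 'I_n) : x <= y -> F (dKJ K J d) x = F (dKJ K J d) y ->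
  F J x = F J y /\ F K (d x) = F K (d y).
Proof.
move=> xy /(F_eqP _ xy) H.
have := @chain n (nat * nat) eq (fun z => (F J z, F K (d z))) (fun _ => erefl)
  (fun a b c e1 e2 => etrans e1 e2) x y xy.
move=> C; suff E : (F J x, F K (d x)) = (F J y, F K (d y)) by case: E.
apply: C => k xk ky.
have kL : k \in dKJ K J d by rewrite -inL_ord; apply: H.
by have [-> ->] := step_fwd kL.
Qed.

Lemma blk_bwd d (x y : 'I_n) : red d -> x <= y -> F J x = F J y ->
  F K (d x) = F K (d y) -> F (dKJ K J d) x = F (dKJ K J d) y.
Proof.
move=> rd xy eJ eK; apply/(F_eqP _ xy) => m xm my.
have mn : m < n.-1 by have := ltn_ord y; lia.
pose k : 'I_n.-1 := Ordinal mn.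
have -> : m = nat_of_ord k by [].
rewrite inL_ord.
have xl : x <= lo k by [].
have hy : hi k <= y by rewrite hiE.
have lh : lo k <= hi k by rewrite hiE /=.
have j1 : F J x = F J (lo k).
  by apply/eqP; rewrite eqn_leq F_mono //= eJ (leq_trans (F_mono _ lh)) // F_mono.
have j2 : F J (hi k) = F J y.
  by apply/eqP; rewrite eqn_leq F_mono //= -eJ (leq_trans (F_mono _ xl)) // F_mono.
have kJ : k \in J.
  have := F_lohi J k; have := F_mono J lh; have := F_mono J hy.
  have := F_mono J xl; rewrite j1; case: (k \in J) => //=; move: j1 j2 eJ; rewrite /=; lia.
apply: step_bwd => //.
have d1 := mono_J rd xl j1; have d2 := mono_J rd hy j2.
have d3 := ltnW (rd.1 k kJ).
have := F_mono K d1; have := F_mono K d2; have := F_mono K d3; rewrite eK; lia.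
Qed.

Lemma blk_eq d (x y : 'I_n) : red d ->
  F (dKJ K J d) x = F (dKJ K J d) y <-> (F J x = F J y /\ F K (d x) = F K (d y)).
Proof.
move=> rd; case: (leqP x y) => [xy|/ltnW yx].
  by split; [exact: blk_fwd | case; exact: blk_bwd].
split=> [e|[e1 e2]].
  by have [] := blk_fwd yx (esym e).
by apply: esym; apply: blk_bwd.
Qed.

Lemma conj_W d v : v \in Wpar (dKJ K J d) ->
  v \in Wpar J /\ (v ^ d)%g \in Wpar K.
Proof.
move=> vL; split.
  have : Wpar (dKJ K J d) \subset Wpar J.
    apply: genS; apply/subsetP => _ /imsetP[j jL ->].
    by apply: imset_f; move: jL; rewrite inE => /andP[].
  by move/subsetP; apply.
have sub : (Wpar (dKJ K J d) :^ d)%g \subset Wpar K.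
  rewrite /Wpar -genJ; apply: genS; apply/subsetP => z.
  rewrite mem_conjg => /imsetP[j jL e].
  move: jL; rewrite inE => /andP[_].
  have -> : Defs.comp (Defs.comp d (stp j)) (d^-1)%g = z.
    by rewrite -[z](conjgKV d) e.
  by [].
by apply: (subsetP sub); rewrite memJ_conjg.
Qed.

Lemma sort_exists L (a : 'I_n -> int) : exists2 v, v \in Wpar L &
  forall x y : 'I_n, x <= y -> F L x = F L y -> (a (v y) <= a (v x))%R.
Proof.
pose mu (v : 'S_n) := cnt (fun x y => a (v x) < a (v y))%R.
suff : forall m (v : 'S_n), mu v < m -> v \in Wpar L -> exists2 v', v' \in Wpar L &
  forall x y : 'I_n, x <= y -> F L x = F L y -> (a (v' y) <= a (v' x))%R.
  by move=> /(_ (mu 1%g).+1 1%g (ltnSn _) (group1 _)).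
elim=> // m IH v vm vL.
case: (boolP [exists l in L, a (v (lo l)) < a (v (hi l))]%R).
  case/existsP => l /andP[lL lt].
  apply: (IH (stp l * v)%g); last by rewrite groupM // stp_W.
  have := cnt_swap (fun x y => a (v x) < a (v y))%R l.
  rewrite lt (lt_gtF lt) /mu /=.
  have -> : cnt (fun x y => a ((stp l * v)%g x) < a ((stp l * v)%g y))%R =
            cnt (fun x y => a (v (stp l x)) < a (v (stp l y)))%R.
    by apply: eq_bigr => x _; apply: eq_bigr => y _; rewrite !permM.
  rewrite /mu in vm; lia.
move/existsPn => H; exists v => // x y xy /(F_eqP _ xy) HL.
apply: (@chain n int (fun p q => q <= p)%R (fun z => a (v z))) => //.
- by move=> p q r pq qr; apply: le_trans qr pq.
- move=> k xk ky; have := H k; rewrite -inL_ord HL // /= -leNgt //.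
Qed.

Lemma dcE (x y : W n) : dc_equiv K J x y <->
  exists u v, [/\ u \in Wpar K, v \in Wpar J, y.1 = Defs.comp (Defs.comp u x.1) v
             & forall i, y.2 i = x.2 (v i)].
Proof.
split.
  move=> [u [v [uK vJ ->]]]; exists u, v; split => // i.
  by rewrite /mulW /ofS /= !ffunE /= add0r addr0.
move=> [u [v [uK vJ e1 e2]]]; exists u, v; split => //.
case: y e1 e2 => y1 y2 /= -> e2; congr (_, _); apply/ffunP => i.
by rewrite /mulW /ofS /= !ffunE /= add0r addr0 e2.
Qed.

Lemma compA (a b c : 'S_n) : Defs.comp a (Defs.comp b c) = Defs.comp (Defs.comp a b) c.
Proof. by rewrite /Defs.comp mulgA. Qed.

Lemma conj_app (v d : 'S_n) z : (((v ^ d)^-1)%g) (d (v z)) = d z.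
Proof. by rewrite /conjg !invMg invgK !permM !permK. Qed.

Lemma Delta_exists (x : W n) : exists2 y, Delta K J y & dc_equiv K J x y.
Proof.
case: x => w a.
pose DC := [set Defs.comp (Defs.comp u w) v | u in Wpar K, v in Wpar J].
have wDC : w \in DC.
  have -> : w = Defs.comp (Defs.comp 1%g w) 1%g by rewrite /Defs.comp mulg1 mul1g.
  by apply: imset2_f; apply: group1.
case: (arg_minnP (@inv n) wDC) => d /imset2P[u0 v0 u0K v0J ->] dmin.
set d0 := Defs.comp (Defs.comp u0 w) v0.
have dD : in_D K J d0.
  move=> u v uK vJ t wt.
  have [t' [st' wt']] := word_exists d0; exists t'; split => //.
  rewrite st' (leq_trans _ (inv_word t)) // wt; apply: dmin.
  rewrite /d0 -!compA compA [Defs.comp (Defs.comp _ _) _]compA.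
  rewrite -[Defs.comp (Defs.comp u u0) w]/(Defs.comp (Defs.comp u u0) w).
  apply: imset2_f; first by rewrite /Defs.comp groupM.
  by rewrite /Defs.comp groupM.
have rd := in_D_red dD.
have [v' v'L dom] := sort_exists (dKJ K J d0) (fun i => a (v0 i)).
have [v'J v'K] := conj_W v'L.
exists (d0, [ffun i => a (v0 (v' i))]).
  split => //; apply/dominantE => x y xy e; rewrite !ffunE; exact: dom.
apply/dcE; exists (u0 * ((v' ^ d0)^-1))%g, (Defs.comp v0 v'); split => //=.
- by rewrite groupM // groupV.
- by rewrite /Defs.comp groupM.
- have fd : forall y, u0 (w (v0 y)) = d0 y by move=> y; rewrite /d0 compE.
  apply/permP => z; rewrite compE [Defs.comp v0 v']/Defs.comp !permM fd.
  by rewrite (fd (v' z)) conj_app.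
- by move=> i; rewrite ffunE /Defs.comp permM.
Qed.

Lemma Delta_uniq (y1 y2 : W n) : Delta K J y1 -> Delta K J y2 ->
  dc_equiv K J y1 y2 -> y1 = y2.
Proof.
case: y1 => d1 a1; case: y2 => d2 a2 [D1 dom1] [D2 dom2] /dcE [u [v [uK vJ /= e1 e2]]].
rewrite /= in D1 dom1 D2 dom2 e1.
have r1 := in_D_red D1; have r2 := in_D_red D2.
have ed := uniq_d r1 r2 uK vJ e1.
rewrite -ed in e1 dom2 *.
have fix1 : forall z, F K (d1 z) = F K (d1 (v z)).
  by move=> z; rewrite {1}e1 compE W_blk.
have vL : forall z, F (dKJ K J d1) (v z) = F (dKJ K J d1) z.
  move=> z; apply/blk_eq => //; split; first by rewrite W_blk.
  by rewrite -fix1.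
have := @sort_uniq n (fun z => F (dKJ K J d1) z) v (fun z => a1 z) vL.
move: dom1 dom2 => /dominantE dom1 /dominantE dom2.
move=> /(_ dom1) H.
have E : forall z, a1 (v z) = a1 z.
  apply: H => x y xy e; rewrite -!e2; exact: dom2.
congr (_, _); apply/ffunP => z; by rewrite e2 E.
Qed.

Lemma Delta_repr : complete_repr K J (Delta K J).
Proof. split; [exact: Delta_exists | exact: Delta_uniq]. Qed.

Definition negW (x : W n) : W n := (x.1, [ffun i => - x.2 i]%R).

Lemma negWK x : negW (negW x) = x.
Proof. by case: x => d a; rewrite /negW /=; congr (_, _); apply/ffunP => i; rewrite !ffunE opprK. Qed.

Lemma dc_neg x y : dc_equiv K J x y -> dc_equiv K J (negW x) (negW y).
Proof.
move=> /dcE [u [v [uK vJ e1 e2]]]; apply/dcE; exists u, v; split => // i.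
by rewrite /negW /= !ffunE e2.
Qed.

Lemma Nabla_Delta x : Nabla K J x <-> Delta K J (negW x).
Proof.
case: x => d a; rewrite /Nabla /Delta /=; split => [[D H]|[D H]]; split => //.
  apply/dominantE => x y xy e; rewrite !ffunE lerN2.
  by move/antidominantE: H; apply.
apply/antidominantE => x y xy e; move/dominantE: H => /(_ x y xy e).
by rewrite !ffunE lerN2.
Qed.

Lemma Nabla_repr : complete_repr K J (Nabla K J).
Proof.
split.
  move=> x; have [y Dy e] := Delta_exists (negW x).
  exists (negW y); first by apply/Nabla_Delta; rewrite negWK.
  by rewrite -(negWK x); apply: dc_neg.
move=> y1 y2 /Nabla_Delta N1 /Nabla_Delta N2 /dc_neg e.
by rewrite -(negWK y1) (Delta_uniq N1 N2 e) negWK.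
Qed.
End T.

Theorem proposition2p3 (n : nat) (hn : 2 <= n) (K J : {set 'I_n.-1}) :
  complete_repr K J (Delta K J) /\ complete_repr K J (Nabla K J).
Proof. split; [exact: Delta_repr | exact: Nabla_repr]. Qed.
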